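(* Let $G$ be a graph, $B\subseteq V(G)$ and $\ell\ge 1$. Then $B$ is a specified $\ell$-leaky forcing set of $G$ if and only if $B$ is an $(\ell-1)$-leaky forcing set of $G$ such that for every set $L\subseteq V(G)$ of $\ell-1$ vertex leaks and every $v\in V(G)\setminus B$ there exist forces $x\to v$ and $y\to v$ in $\mathcal{F}_L(B)$ with $x\neq y$.
   Context: All graphs are finite, simple and undirected. Zero forcing: a blue vertex $u$ with exactly one white neighbor $w$ may force $w$ (color it blue), written $u\to w$. From an initial blue set $B$, a forcing sequence is a chronologically ordered list of forces each valid when performed. A vertex leak is a vertex not allowed to perform any force; $B$ is an $\ell$-leaky forcing set if for every set of at most $\ell$ vertex leaks, exhaustively applying the forcing rule from $B$ (leaks never forcing) colors all of $V(G)$ blue. For $L\subseteq V(G)$, $\mathcal{F}_L(B)$ is the set of all forces $x\to v$ occurring in some forcing sequence from $B$ in which no vertex of $L$ performs a force. A specified leak is an ordered pair $v\to u$ of vertices indicating that $v$ is prohibited from forcing $u$. $B$ is a specified $\ell$-leaky forcing set if for every set of at most $\ell$ specified leaks, exhaustively applying the forcing rule from $B$ while never performing a prohibited force colors all of $V(G)$ blue. *)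

(* Defs.v *)
(* A finite simple graph is a symmetric irreflexive relation
   [adj : rel T] on a finite type [T]. *)
From mathcomp Require Import all_boot all_order.
Set Implicit Arguments. Unset Strict Implicit. Unset Printing Implicit Defensive.

Section ZeroForcing.
Variables (T : finType) (adj : rel T).

(* [ok u w] says whether the force u -> w is permitted (encodes leaks). *)
Definition valid_force (ok : T -> T -> bool) (S : {set T}) (u w : T) : bool :=
  [&& u \in S, w \notin S, adj u w, ok u w &
      [forall z, (adj u z && (z \notin S)) ==> (z == w)]].

Fixpoint valid_seq (ok : T -> T -> bool) (S : {set T}) (s : seq (T * T)) : bool :=
  match s with
  | [::] => true
  | (u, w) :: s' => valid_force ok S u w && valid_seq ok (w |: S) s'
  end.

Definition blue_after (S : {set T}) (s : seq (T * T)) : {set T} :=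
  S :|: [set x | x \in map snd s].

Definition stalled (ok : T -> T -> bool) (S : {set T}) : bool :=
  ~~ [exists u, exists w, valid_force ok S u w].

Definition forces_all (ok : T -> T -> bool) (B : {set T}) : Prop :=
  forall s, valid_seq ok B s -> stalled ok (blue_after B s) ->
    blue_after B s = [set: T].

Definition vertex_leak_ok (L : {set T}) : T -> T -> bool :=
  fun u _ => u \notin L.

Definition leaky_forcing_set (B : {set T}) (l : nat) : Prop :=
  forall L : {set T}, #|L| <= l -> forces_all (vertex_leak_ok L) B.

Definition specified_leaky_forcing_set (B : {set T}) (l : nat) : Prop :=
  forall SL : {set T * T}, #|SL| <= l ->
    forces_all (fun u w => (u, w) \notin SL) B.

Definition in_FL (L B : {set T}) (x v : T) : Prop :=
  exists2 s, valid_seq (vertex_leak_ok L) B s & (x, v) \in s.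

End ZeroForcing.

(* Main.v *)
Require Import Defs.
From mathcomp Require Import all_boot all_order zify.
Set Implicit Arguments. Unset Strict Implicit. Unset Printing Implicit Defensive.

Lemma blue_after_nil (T : finType) (S : {set T}) : blue_after S [::] = S.
Proof. by apply/setP=> x; rewrite !inE orbF. Qed.

Lemma blue_after_cons (T : finType) (S : {set T}) u w s :
  blue_after S ((u, w) :: s) = blue_after (w |: S) s.
Proof. by apply/setP=> x; rewrite !inE /=; case: (x \in S); case: (x == w); rewrite /= ?orbT. Qed.

Lemma valid_force_mono (T : finType) (adj : rel T) ok S (C : {set T}) u w :
  valid_force adj ok S u w -> S \subset C -> w \notin C -> valid_force adj ok C u w.
Proof.
case/and5P=> uS wS auw ok' /forallP H SC wC; apply/and5P; split=> //.
  exact: (subsetP SC).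
apply/forallP=> z; apply/implyP=> /andP[auz zC]; have := H z.
by rewrite auz /= (contra (subsetP SC z) zC).
Qed.

Lemma valid_seq_ok_mono (T : finType) (adj : rel T) (ok ok' : T -> T -> bool) S s :
  (forall u w, ok u w -> ok' u w) -> valid_seq adj ok S s -> valid_seq adj ok' S s.
Proof.
move=> H; elim: s S => [|[u w] s IH] S //= /andP[/and5P[a b c d e] /IH ->].
by rewrite andbT /valid_force a b c (H _ _ d) e.
Qed.

Lemma valid_seq_ok (T : finType) (adj : rel T) ok S s u w :
  valid_seq adj ok S s -> (u, w) \in s -> ok u w.
Proof.
elim: s S => [|[u' w'] s IH] S //= /andP[/and5P[_ _ _ o _] /IH H].
by rewrite in_cons => /orP[/eqP[-> ->] //|/H].
Qed.

Lemma valid_seq_notin (T : finType) (adj : rel T) ok S s u w :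
  valid_seq adj ok S s -> (u, w) \in s -> w \notin S.
Proof.
elim: s S => [|[u' w'] s IH] S //= /andP[/and5P[_ wS _ _ _] /IH H].
rewrite in_cons => /orP[/eqP[_ ->] //|/H]; apply: contra => wS'.
by rewrite inE wS' orbT.
Qed.

Lemma exists_maximal (T : finType) (adj : rel T) ok (S : {set T}) :
  exists s, valid_seq adj ok S s && stalled adj ok (blue_after S s).
Proof.
have [n Hn] : exists n, #|~: S| <= n by exists #|~: S|.
elim: n S Hn => [|n IH] S Hn.
  exists [::]; rewrite /= blue_after_nil; apply/existsPn => u; apply/existsPn => w.
  apply/negP => /and5P[_ wS _ _ _].
  by move: Hn; rewrite leqn0 => /eqP/card0_eq/(_ w); rewrite inE wS.
case: (boolP (stalled adj ok S)) => st.
  by exists [::]; rewrite /= blue_after_nil.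
move: st; rewrite negbK => /existsP[u /existsP[w vf]].
have wS : w \notin S by case/and5P: vf.
have : #|~: (w |: S)| <= n.
  have : ~: (w |: S) \proper ~: S.
    rewrite setCU; apply/properP; split; first exact: subsetIr.
    by exists w; rewrite !inE ?eqxx.
  by move/proper_card => H; rewrite -ltnS (leq_trans H).
case/IH => s /andP[vs st]; exists ((u, w) :: s).
by rewrite /= vf vs blue_after_cons.
Qed.

Lemma vf_true (T : finType) (adj : rel T) ok S u w :
  valid_force adj ok S u w -> valid_force adj (fun _ _ => true) S u w.
Proof. by case/and5P=> a b c _ e; rewrite /valid_force a b c e. Qed.

Lemma vf_ok (T : finType) (adj : rel T) (ok : T -> T -> bool) S u w :
  valid_force adj (fun _ _ => true) S u w -> ok u w -> valid_force adj ok S u w.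
Proof. by case/and5P=> a b c _ e o; rewrite /valid_force a b c o e. Qed.

Lemma vf_unique (T : finType) (adj : rel T) ok S u w w' :
  valid_force adj ok S u w -> adj u w' -> w' \notin S -> w' = w.
Proof. by case/and5P=> _ _ _ _ /forallP/(_ w') H a b; apply/eqP; rewrite a b in H. Qed.

Lemma stalledP (T : finType) (adj : rel T) ok C :
  stalled adj ok C -> forall u w, ~~ valid_force adj ok C u w.
Proof. by move=> /existsPn H u; move: (H u) => /existsPn. Qed.

Lemma stay (T : finType) (adj : rel T) ok (C S : {set T}) s :
  (forall u w, ~~ valid_force adj ok C u w) -> S \subset C ->
  valid_seq adj ok S s -> blue_after S s \subset C.
Proof.
move=> hC; elim: s S => [|[u w] s IH] S SC /=; first by rewrite blue_after_nil.
case/andP=> vf vs; rewrite blue_after_cons; apply: IH vs.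
case: (boolP (w \in C)) => wC; first by rewrite subUset sub1set wC.
by have := hC u w; rewrite (valid_force_mono vf SC wC).
Qed.

Lemma stay2 (T : finType) (adj : rel T) ok (C S : {set T}) s a b x :
  (forall u w, valid_force adj ok C u w -> u = a /\ w = b) -> S \subset C ->
  b \notin C -> valid_seq adj ok S s -> (x, b) \in s -> x <> a -> False.
Proof.
move=> hC; elim: s S => [|[u w] s IH] S SC bC //= /andP[vf vs].
rewrite in_cons => /orP[/eqP[xu bw] xa|xin xa].
  subst x b; by case: (hC _ _ (valid_force_mono vf SC bC)).
case: (boolP (w \in C)) => wC.
  by apply: (IH (w |: S)) => //; rewrite subUset sub1set wC.
case: (hC _ _ (valid_force_mono vf SC wC)) => _ wb; subst w.
by move: (valid_seq_notin vs xin); rewrite !inE ?eqxx.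
Qed.

Lemma key (T : finType) (adj : rel T) (B : {set T}) (l : nat)
  (L : {set T}) (E : {set T * T}) (ok : T -> T -> bool) s :
  specified_leaky_forcing_set adj B l -> 1 <= l -> #|L| <= l.-1 -> #|E| <= 1 ->
  (forall u w, ok u w = (u \notin L) && ((u, w) \notin E)) ->
  valid_seq adj ok B s -> stalled adj ok (blue_after B s) ->
  blue_after B s = [set: T].
Proof.
move=> hsp hl hL hE hok vs st.
set C := blue_after B s.
set SL1 := [set p : T * T | (p.1 \in L) && valid_force adj (fun _ _ => true) C p.1 p.2].
have c1 : #|SL1| <= #|L|.
  have inj : {in SL1 &, injective fst}.
    move=> [u w] [u' w']; rewrite !inE /= => /andP[_ v1] /andP[_ v2] eu; subst u'.
    case/and5P: v2 => _ w'C auw' _ _.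
    by rewrite (vf_unique v1 auw' w'C).
  rewrite -(card_in_imset inj); apply: subset_leq_card; apply/subsetP=> x.
  by case/imsetP=> -[u w]; rewrite inE /= => /andP[uL _] ->.
apply: (hsp (SL1 :|: E)).
  have hp : l.-1 + 1 = l by rewrite addn1 prednK.
  rewrite cardsU; apply: leq_trans (leq_subr _ _) _; apply: leq_trans (leq_add c1 hE) _.
  by rewrite -hp leq_add2r.
  apply: valid_seq_ok_mono vs => u w; rewrite hok => /andP[uL uE].
  by rewrite !inE /= negb_or uE andbT (negbTE uL).
apply/existsPn=> u; apply/existsPn=> w; apply/negP=> vf.
have vt := vf_true vf.
have := stalledP st u w; rewrite (vf_ok vt) //.
case/and5P: vf => _ _ _ o _; move: o; rewrite !inE /= negb_or => /andP[n1 n2].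
rewrite hok n2 andbT; apply/negP=> uL; move: n1.
by rewrite uL vt.
Qed.

Theorem theorem3p1 (T : finType) (adj : rel T)
  (adj_sym : symmetric adj) (adj_irr : irreflexive adj)
  (B : {set T}) (l : nat) (hl : 1 <= l) :
  specified_leaky_forcing_set adj B l <->
  (leaky_forcing_set adj B l.-1 /\
   forall L : {set T}, #|L| <= l.-1 ->
   forall v, v \notin B ->
     exists x y, [/\ x != y, in_FL adj L B x v & in_FL adj L B y v]).
Proof.
split.
  move=> hsp.
  have hlk : leaky_forcing_set adj B l.-1.
    move=> L hL s vs st; apply: (key (E := set0) hsp hl hL _ _ vs st).
      by rewrite cards0.
    by move=> u w; rewrite inE andbT.
  split=> // L hL v vB.
  have [s /andP[vs st]] := exists_maximal adj (vertex_leak_ok L) B.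
  have : v \in blue_after B s by rewrite (hlk L hL s vs st) inE.
  rewrite inE (negbTE vB) /= inE => /mapP[[x v'] xin /= ev]; subst v'.
  pose ok := fun u w => (u \notin L) && ((u, w) \notin [set (x, v)]).
  have [s' /andP[vs' st']] := exists_maximal adj ok B.
  have : v \in blue_after B s' by rewrite (key hsp hl hL (eq_leq (cards1 (x, v))) (fun _ _ => erefl) vs' st') inE.
  rewrite inE (negbTE vB) /= inE => /mapP[[y v'] yin /= ev]; subst v'.
  exists x, y; split.
  - have := valid_seq_ok vs' yin; rewrite /ok inE /= => /andP[_].
    by apply: contra => /eqP ->.
  - by exists s.
  - exists s' => //; apply: valid_seq_ok_mono vs' => u w /andP[].
    by rewrite /vertex_leak_ok.
move=> [hlk hdf] SL hSL s0 vs0 st0.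
set C := blue_after B s0.
have BC : B \subset C by apply: subsetUl.
set P := [set u | [exists w, valid_force adj (fun _ _ => true) C u w]].
have PSL : forall u w, valid_force adj (fun _ _ => true) C u w -> (u, w) \in SL.
  move=> u w vt; apply: contraT => nin.
  by have := stalledP st0 u w; rewrite (vf_ok vt).
have cP : #|P| <= l.
  apply: leq_trans hSL; apply: leq_trans (leq_imset_card fst SL).
  apply: subset_leq_card; apply/subsetP=> u; rewrite inE => /existsP[w vt].
  by apply/imsetP; exists (u, w) => //; apply: PSL.
case: (leqP #|P| l.-1) => hP.
  have [s /andP[vs st]] := exists_maximal adj (vertex_leak_ok P) B.
  have hC : forall u w, ~~ valid_force adj (vertex_leak_ok P) C u w.
    move=> u w; apply/negP=> vf; case/and5P: (vf) => _ _ _ o _.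
    move: o; rewrite /vertex_leak_ok /P inE => /negP; apply; apply/existsP; exists w; exact: vf_true vf.
  have := stay hC BC vs; rewrite (hlk P hP s vs st) => sub.
  by apply/eqP; rewrite eqEsubset subsetT sub.
exfalso.
have [a aP] : exists a, a \in P by apply/card_gt0P; apply: leq_ltn_trans hP.
have := aP; rewrite inE => /existsP[b vab].
have bC : b \notin C by case/and5P: vab.
have bB : b \notin B by apply: contra bC; apply: (subsetP BC).
set L := P :\ a.
have hL : #|L| <= l.-1.
  move: cP hP; rewrite (cardsD1 a P) aP /= -/L => h1 h2.
  by rewrite -ltnS prednK.
have hC : forall u w, valid_force adj (vertex_leak_ok L) C u w -> u = a /\ w = b.
  move=> u w vf; have vt := vf_true vf.
  have uP : u \in P by rewrite inE; apply/existsP; exists w.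
  have ua : u = a.
    case/and5P: vf => _ _ _ o _; move: o; rewrite /vertex_leak_ok /L in_setD1.
    by rewrite negb_and negbK uP orbF => /eqP.
  subst u; split=> //; case/and5P: vt => _ wC auw _ _.
  exact: (vf_unique vab auw wC).
have [x [y [xy [s1 vs1 in1] [s2 vs2 in2]]]] := hdf L hL b bB.
case: (eqVneq x a) => xa.
  subst x; apply: (stay2 hC BC bC vs2 in2) => ya; subst y.
  by rewrite eqxx in xy.
by apply: (stay2 hC BC bC vs1 in1); apply/eqP.
Qed.
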